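(* In the setting described in the context, let $\sigma\in\mathcal{B}_2$ be a $\Sigma_m$-proximity on $A$. Then for all $x,y\in A$: $\sigma(x,y)=\sigma(y,x)$ (symmetry) and $\sigma(x,x)\ge\sigma(x,y)$ (egocentrism).
   Context: $A$ is a nonempty set (possibly infinite). $\mathcal{B}_1$ is a set of functions $A\to\mathbb{R}$ forming a real linear space containing all constant functions, and $\mu:\mathcal{B}_1\to\mathbb{R}$ is a linear functional with $\mu(c)=c$ for every constant function $c$ and monotone: if $f,g\in\mathcal{B}_1$ and $f(x)\ge g(x)$ for all $x$, then $\mu(f)\ge\mu(g)$. For $f:A^2\to\mathbb{R}$ such that $y\mapsto f(x,y)$ lies in $\mathcal{B}_1$ for every $x$, write $f(x,\cdot)=\mu(y\mapsto f(x,y))$, a function of $x$. $\mathcal{B}_2$ is a set of functions $A^2\to\mathbb{R}$ forming a real linear space that contains all constant functions and all functions $(x,y)\mapsto h(x)$ and $(x,y)\mapsto h(y)$ with $h\in\mathcal{B}_1$, and such that for every $f\in\mathcal{B}_2$: $y\mapsto f(x,y)\in\mathcal{B}_1$ for every $x\in A$, $x\mapsto f(x,\cdot)\in\mathcal{B}_1$, and $x\mapsto f(x,x)\in\mathcal{B}_1$. For $m\in\mathbb{R}$, a function $\sigma\in\mathcal{B}_2$ is a $\Sigma_m$-proximity on $A$ if for all $x,y,z\in A$: (1) $\sigma(x,\cdot)=m$; (2) $\sigma(x,y)+\sigma(x,z)-\sigma(y,z)\le\sigma(x,x)$, with strict inequality whenever $z=y$ and $x\ne y$. *)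

(* Defs.v *)
From Stdlib Require Export Reals.
Open Scope R_scope.

Definition lin_space {X : Type} (B : (X -> R) -> Prop) : Prop :=
  B (fun _ => 0) /\
  (forall f g : X -> R, B f -> B g -> B (fun x => f x + g x)) /\
  (forall (a : R) (f : X -> R), B f -> B (fun x => a * f x)).

Definition has_constants {X : Type} (B : (X -> R) -> Prop) : Prop :=
  forall c : R, B (fun _ => c).

(* Standing assumptions on B1 and the mean mu (mu is a total map, only
   constrained on B1). *)
Definition mean_space {A : Type} (B1 : (A -> R) -> Prop) (mu : (A -> R) -> R) : Prop :=
  lin_space B1 /\ has_constants B1 /\
  (forall f g, B1 f -> B1 g -> mu (fun x => f x + g x) = mu f + mu g) /\
  (forall a f, B1 f -> mu (fun x => a * f x) = a * mu f) /\
  (forall c : R, mu (fun _ => c) = c) /\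
  (forall f g, B1 f -> B1 g -> (forall x, f x >= g x) -> mu f >= mu g).

Definition B2_space {A : Type} (B1 : (A -> R) -> Prop) (mu : (A -> R) -> R)
    (B2 : (A -> A -> R) -> Prop) : Prop :=
  B2 (fun _ _ => 0) /\
  (forall f g, B2 f -> B2 g -> B2 (fun x y => f x y + g x y)) /\
  (forall a f, B2 f -> B2 (fun x y => a * f x y)) /\
  (forall c : R, B2 (fun _ _ => c)) /\
  (forall h, B1 h -> B2 (fun x _ => h x)) /\
  (forall h, B1 h -> B2 (fun _ y => h y)) /\
  (forall f, B2 f -> forall x, B1 (fun y => f x y)) /\
  (forall f, B2 f -> B1 (fun x => mu (fun y => f x y))) /\
  (forall f, B2 f -> B1 (fun x => f x x)).

Definition Sigma_proximity {A : Type} (mu : (A -> R) -> R)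
    (B2 : (A -> A -> R) -> Prop) (m : R) (sigma : A -> A -> R) : Prop :=
  B2 sigma /\
  (forall x, mu (fun y => sigma x y) = m) /\
  (forall x y z, sigma x y + sigma x z - sigma y z <= sigma x x) /\
  (forall x y, x <> y -> sigma x y + sigma x y - sigma y y < sigma x x).

(* Main.v *)
Require Import Defs.
From Stdlib Require Import Reals Lra FunctionalExtensionality.
Open Scope R_scope.

Theorem proposition1 (A : Type) (Hne : inhabited A)
    (B1 : (A -> R) -> Prop) (mu : (A -> R) -> R)
    (B2 : (A -> A -> R) -> Prop) (m : R) (sigma : A -> A -> R) :
  mean_space B1 mu ->
  B2_space B1 mu B2 ->
  Sigma_proximity mu B2 m sigma ->
  forall x y : A, sigma x y = sigma y x /\ sigma x x >= sigma x y.
Proof.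
  intros [[_ [Badd Bsc]] [Bc [Madd [Msc [Mc Mmon]]]]]
         [_ [_ [_ [_ [_ [_ [Bsec _]]]]]]] [Bs [Hm [Htri _]]] x y.
  split.
  - pose proof (Htri x y x). pose proof (Htri y x y). lra.
  - set (g1 := fun z => sigma x z).
    set (g2 := fun z => (-1) * sigma y z).
    assert (B1g1 : B1 g1) by (apply Bsec; exact Bs).
    assert (B1g2 : B1 g2) by (apply Bsc; apply Bsec; exact Bs).
    assert (B12 : B1 (fun z => g1 z + g2 z)) by (apply Badd; auto).
    assert (Bg : B1 (fun z => sigma x y + (g1 z + g2 z))).
    { apply (Badd (fun _ => sigma x y) (fun z => g1 z + g2 z)); auto. }
    pose proof (Mmon (fun _ => sigma x x) _ (Bc _) Bg) as Hmon.
    rewrite Mc in Hmon.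
    rewrite (Madd (fun _ => sigma x y) (fun z => g1 z + g2 z)) in Hmon; auto.
    rewrite Mc, (Madd g1 g2) in Hmon; auto.
    unfold g2 in Hmon. rewrite (Msc (-1) (fun z => sigma y z)) in Hmon
      by (apply Bsec; exact Bs).
    unfold g1 in Hmon. rewrite !Hm in Hmon.
    assert (sigma x x >= sigma x y + (m + -1 * m)).
    { apply Hmon. intro z. unfold g1, g2. pose proof (Htri x y z). lra. }
    unfold g1; lra.
Qed.
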